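(* Suppose $|X|\ge3$. If a random choice rule $p$ on $X$ is consistent with the persistent craving model, then $p$ does not satisfy regularity, i.e. there exist $x\in A\subseteq B\subseteq X$ with $p(x,A)<p(x,B)$.
   Context: $X$ is a finite set, $\mathcal{X}$ its nonempty subsets, $\mathcal{L}(X)$ its linear orders, $M(\succ,A)$ the $\succ$-maximal element of $A$, $N(x,A)=\{\succ: x\succ y\ \forall y\in A\setminus\{x\}\}$. A random choice rule is $p:X\times\mathcal{X}\to[0,1]$ with $p(x,A)\ge0$ and $\sum_{x\in A}p(x,A)=1$. Given a linear order $\rhd$, the craving preferences $\{\succ_x\}_{x\in X}$ are defined by: $x\succ_x y$ for all $y\ne x$, and for $y,z\ne x$, $y\succ_x z$ iff $y\rhd z$. A distribution $\nu\in\Delta(\mathcal{L}(X))$ supported on $\{\succ_x\}_{x\in X}$ is craving monotonic w.r.t. $\rhd$ if $x\rhd y$ implies $\nu(\succ_x)>\nu(\succ_y)>0$. A persistence function is $\phi:X^2\to[0,1)$ with $\phi(x,x)=0$ and $\phi(x,y)>0$ for $x\ne y$. The transition function $t:X\times\mathcal{L}(X)\to\Delta(\mathcal{L}(X))$ has a persistent craving representation $(\rhd,\nu,\phi)$ if $t(x,\succ_y)=\phi(x,y)\delta_{\succ_y}+(1-\phi(x,y))\nu$ for all $x,y$, and $t(x,\succ)=\nu$ for every $\succ$ outside the support of $\nu$ ($\delta_{\succ}$ is the point mass). For each $A\in\mathcal{X}$, $\nu_A$ is the (unique) stationary distribution of the Markov chain on $\mathcal{L}(X)$ with transition probabilities $m_A(\succ,\succ')=t_{\succ'}(M(\succ,A),\succ)$.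 $p$ is consistent with the persistent craving model if there is such a $t$ (with some $\rhd$, craving monotonic $\nu$, persistence function $\phi$) with $p(x,A)=\sum_{\succ\in N(x,A)}\nu_A(\succ)$ for all $x\in A\in\mathcal{X}$. *)

(* Defs.v *)
From HB Require Import structures.
From mathcomp Require Import all_boot all_order all_algebra.
From mathcomp Require Import reals.
Set Implicit Arguments. Unset Strict Implicit. Unset Printing Implicit Defensive.
Import Order.TTheory GRing.Theory Num.Theory.
Local Open Scope ring_scope.

Section PC.
Variable X : finType.
Variable R : realType.

Definition is_linord (r : {ffun X * X -> bool}) : bool :=
  [forall a, ~~ r (a, a)] &&
  [forall a, forall b, forall c, r (a, b) && r (b, c) ==> r (a, c)] &&
  [forall a, forall b, (a != b) ==> r (a, b) || r (b, a)].

Definition linord := {r : {ffun X * X -> bool} | is_linord r}.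

(* lt o a b  means  a ≻ b  in the order o *)
Definition lt (o : linord) (a b : X) : bool := val o (a, b).

Definition Nset (x : X) (A : {set X}) : {set linord} :=
  [set o | [forall y in A, (y != x) ==> lt o x y]].

Definition Mel (o : linord) (A : {set X}) : option X :=
  [pick x in A | [forall y in A, (y != x) ==> lt o x y]].

Definition is_crave (rhd : linord) (x : X) (o : linord) : bool :=
  [forall a, forall b,
     lt o a b == (a != b) && ((a == x) || ((b != x) && lt rhd a b))].

Definition random_choice_rule (p : X -> {set X} -> R) : Prop :=
  forall A : {set X}, A != set0 ->
    (forall x, 0 <= p x A <= 1) /\ \sum_(x in A) p x A = 1.

Definition is_dist (T : finType) (d : T -> R) : Prop :=
  (forall t, 0 <= d t) /\ \sum_t d t = 1.

Definition craving_monotonic (rhd : linord) (nu : linord -> R) : Prop :=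
  is_dist nu /\
  (forall o, nu o != 0 -> exists x, is_crave rhd x o) /\
  (forall x y ox oy, is_crave rhd x ox -> is_crave rhd y oy ->
     lt rhd x y -> nu ox > nu oy /\ nu oy > 0).

Definition persistence (phi : X -> X -> R) : Prop :=
  forall x y, 0 <= phi x y < 1 /\ (phi x x = 0) /\ (x != y -> phi x y > 0).

(* t x o o' = probability that t(x, o) assigns to o'. *)
Definition persistent_craving_rep (t : X -> linord -> linord -> R)
    (rhd : linord) (nu : linord -> R) (phi : X -> X -> R) : Prop :=
  craving_monotonic rhd nu /\ persistence phi /\
  (forall x y oy, is_crave rhd y oy ->
     forall o', t x oy o' = phi x y * (o' == oy)%:R + (1 - phi x y) * nu o') /\
  (forall x o, nu o = 0 -> forall o', t x o o' = nu o').

Definition mchain (t : X -> linord -> linord -> R) (A : {set X})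
    (o o' : linord) : R :=
  match Mel o A with Some x => t x o o' | None => 0 end.

Definition stationary (t : X -> linord -> linord -> R) (A : {set X})
    (nuA : linord -> R) : Prop :=
  is_dist nuA /\ forall o', nuA o' = \sum_o nuA o * mchain t A o o'.

Definition consistent_PC (p : X -> {set X} -> R) : Prop :=
  exists t rhd nu phi,
    persistent_craving_rep t rhd nu phi /\
    forall A : {set X}, A != set0 ->
      exists nuA, stationary t A nuA /\
        forall x, x \in A -> p x A = \sum_(o in Nset x A) nuA o.

End PC.

(* Main.v *)
Require Import Defs.
From HB Require Import structures.
From mathcomp Require Import all_boot all_order all_algebra.
From mathcomp Require Import reals ring lra.
Set Implicit Arguments. Unset Strict Implicit. Unset Printing Implicit Defensive.
Import Order.TTheory GRing.Theory Num.Theory.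
Local Open Scope ring_scope.

Lemma linP (X : finType) (o : linord X) :
  [/\ forall a, ~~ lt o a a,
      forall a b c, lt o a b -> lt o b c -> lt o a c
    & forall a b, a != b -> lt o a b || lt o b a].
Proof.
case: o => r Hr; rewrite /lt /=; move: Hr => /andP[/andP[/forallP H1 /forallP H2] /forallP H3]; split.
- exact H1.
- move=> a b c h1 h2; have := H2 a; move/forallP/(_ b)/forallP/(_ c)/implyP; apply; by rewrite h1 h2.
- move=> a b ab; have := H3 a; move/forallP/(_ b)/implyP; exact.
Qed.

Lemma lo_asym (X : finType) (o : linord X) a b : lt o a b -> ~~ lt o b a.
Proof.
case: (linP o) => irr tr _ hab; apply/negP => hba.
by move: (irr a); rewrite (tr _ _ _ hab hba).
Qed.

Lemma crave_lt (X : finType) (rhd o : linord X) w : is_crave rhd w o ->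
  forall a b, lt o a b = (a != b) && ((a == w) || ((b != w) && lt rhd a b)).
Proof. move/forallP=> H a b; apply/eqP; have := H a; move/forallP/(_ b); exact. Qed.

Lemma crave_uniq (X : finType) (rhd o o' : linord X) w :
  is_crave rhd w o -> is_crave rhd w o' -> o = o'.
Proof.
move=> H H'; apply: val_inj; apply/ffunP => -[a b].
have := crave_lt H a b; have := crave_lt H' a b; rewrite /lt => -> ->. done.
Qed.

Lemma crave_neq (X : finType) (rhd oa ob : linord X) a b :
  is_crave rhd a oa -> is_crave rhd b ob -> a != b -> oa != ob.
Proof.
move=> Ha Hb ab; apply/negP => /eqP E.
have := crave_lt Ha a b; rewrite eqxx ab /= E (crave_lt Hb a b) ab eqxx /=.
by rewrite (negbTE ab).
Qed.

Lemma crave_exists (X : finType) (rhd : linord X) w : exists o, is_crave rhd w o.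
Proof.
case: (linP rhd) => irr tr tot.
pose r := [ffun ab : X * X => (ab.1 != ab.2) && ((ab.1 == w) || ((ab.2 != w) && lt rhd ab.1 ab.2))].
have Hr : is_linord r.
  apply/andP; split; first (apply/andP; split).
  - by apply/forallP => a; rewrite ffunE /= eqxx.
  - apply/forallP => a; apply/forallP => b; apply/forallP => c; apply/implyP.
    rewrite !ffunE /= => /andP[/andP[ab H1] /andP[bc H2]].
    case: (eqVneq a c) => [Eac|ac].
      subst c. case/orP: H1 => [/eqP aw|/andP[bw r1]].
        subst a. by move: H2; rewrite (negbTE bc) /= eqxx.
      case/orP: H2 => [/eqP ba|/andP[aw r2]]; first by rewrite ba eqxx in bw.
      by move: (irr a); rewrite (tr _ _ _ r1 r2).
    case/orP: H1 => [->//|/andP[bw r1]].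
    case/orP: H2 => [/eqP E|/andP[cw r2]]; first by rewrite E eqxx in bw.
    by rewrite cw (tr _ _ _ r1 r2) orbT.
  - apply/forallP => a; apply/forallP => b; apply/implyP => ab.
    rewrite !ffunE /=; have ba : b != a by rewrite eq_sym.
    apply/orP; case: (eqVneq a w) => [E|aw].
      by left; apply/andP; split => //; rewrite E eqxx.
    case: (eqVneq b w) => [E|bw].
      by right; apply/andP; split => //; rewrite E eqxx.
    case/orP: (tot _ _ ab) => h; [left|right]; apply/andP; split => //; apply/orP; right; apply/andP; by split.
exists (exist _ r Hr); apply/forallP => a; apply/forallP => b.
by rewrite /lt /= ffunE.
Qed.

Lemma Mel_eq (X : finType) (o : linord X) (A : {set X}) a :
  a \in A -> (forall b, b \in A -> b != a -> lt o a b) -> Mel o A = Some a.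
Proof.
move=> aA Ha; rewrite /Mel; case: pickP => [a' /andP[a'A /forallP Ha']|none].
  case: (eqVneq a' a) => [->//|a'a].
  have h1 := Ha _ a'A a'a.
  have := Ha' a; rewrite aA eq_sym a'a /= => h2.
  by move: (lo_asym h1); rewrite h2.
have := none a; rewrite aA /=; move/negP; case; apply/forallP => b.
by apply/implyP => bA; apply/implyP; apply: Ha.
Qed.

Lemma Mel2 (X : finType) (o : linord X) x y : x != y ->
  Mel o [set x; y] = Some (if lt o x y then x else y).
Proof.
move=> xy; case: (linP o) => irr tr tot.
case: ifP => hxy; apply: Mel_eq; rewrite ?in_set2 ?eqxx ?orbT // => b;
  rewrite in_set2 => /orP[]/eqP-> //; rewrite ?eqxx //.
move=> _; move: (tot _ _ xy); by rewrite hxy.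
Qed.

Lemma nu_pos (X : finType) (R : realType) (rhd : linord X) (nu : linord X -> R) w w' ow :
  craving_monotonic rhd nu -> w != w' -> is_crave rhd w ow -> 0 < nu ow.
Proof.
move=> [_ [_ mon]] ww' Hw; have [ow' Hw'] := crave_exists rhd w'.
case: (linP rhd) => _ _ tot.
case/orP: (tot _ _ ww') => h.
  by have [h1 h2] := mon _ _ _ _ Hw Hw' h; apply: lt_trans h1.
by have [_ ->] := mon _ _ _ _ Hw' Hw h.
Qed.

Lemma three (X : finType) : (2 < #|X|)%N -> exists a b c : X, [/\ a != b, a != c & b != c].
Proof.
move=> H.
have /card_gt0P [a _] : (0 < #|X|)%N by apply: leq_trans H.
have : (1 < #|[set~ a]|)%N by rewrite cardsC1; case: #|X| H => //= n; rewrite ltnS.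
move=> H1; have /card_gt0P [b bA] : (0 < #|[set~ a]|)%N by apply: ltnW.
have : (0 < #|[set~ a] :\ b|)%N.
  by move: H1; rewrite (cardsD1 b) bA add1n ltnS.
case/card_gt0P => c; rewrite !inE => /andP[cb ca].
exists a, b, c; split => //; first by move: bA; rewrite !inE eq_sym.
all: by rewrite eq_sym.
Qed.
Unset Implicit Arguments.

Theorem proposition1 (X : finType) (R : realType) (p : X -> {set X} -> R) :
  (2 < #|X|)%N ->
  random_choice_rule p ->
  consistent_PC p ->
  exists (x : X) (A B : {set X}), x \in A /\ A \subset B /\ p x A < p x B.
Proof.
move=> H3 _ [t [rhd [nu [phi [[CM [phiP [tcrave tnon]]] HA]]]]].
have CM' := CM; move: CM' => [[nu0 nu1] [nusupp numon]].
case: (linP rhd) => irr tr tot.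
have [x [y [z [xy xz yz ryx]]]] : exists x y z : X,
    [/\ x != y, x != z, y != z & lt rhd y x].
  have [a [b [c [ab ac bc]]]] := three H3.
  case/orP: (tot _ _ ab) => h.
    by exists b, a, c; split => //; rewrite eq_sym.
  by exists a, b, c.
have [ox Hx] := crave_exists rhd x.
have [oy Hy] := crave_exists rhd y.
have [oz Hz] := crave_exists rhd z.
have nux : 0 < nu ox by exact: (nu_pos CM xy Hx).
have nuz : 0 < nu oz by apply: (nu_pos (w':=x) CM _ Hz); rewrite eq_sym.
have nuzero : forall o, ~~ [exists w, is_crave rhd w o] -> nu o = 0.
  move=> o /existsP nc; apply/eqP; apply/negPn/negP => /nusupp [w hw].
  by apply: nc; exists w.
have m0 : forall A o o', ~~ [exists w, is_crave rhd w o'] -> mchain t A o o' = 0.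
  move=> A o o' nc; rewrite /mchain; case: (Mel o A) => [M|//].
  case: (boolP [exists w, is_crave rhd w o]) => [/existsP [w hw]|nco].
    rewrite (tcrave M w o hw o') (nuzero _ nc) mulr0 addr0.
    case: (eqVneq o' o) => [E|]; last by rewrite mulr0.
    by move: nc; rewrite E; case/existsP; exists w.
  by rewrite (tnon M o (nuzero _ nco)) (nuzero _ nc).
have st0 : forall A nuA o, stationary t A nuA -> ~~ [exists w, is_crave rhd w o] -> nuA o = 0.
  move=> A nuA o [_ st] nc; rewrite st big1 // => o' _.
  by rewrite m0 // mulr0.
pose A := [set x; y].
have A0 : A != set0 by apply/set0Pn; exists x; rewrite !inE eqxx.
have T0 : [set: X] != set0 by apply/set0Pn; exists x; rewrite !inE.
have [nuA [stA pA]] := HA A A0.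
have [nuX [stX pX]] := HA _ T0.
exists x, A, setT; split; first by rewrite !inE eqxx.
split; first exact: subsetT.
have xA : x \in A by rewrite !inE eqxx.
have yx : y != x by rewrite eq_sym.
have zx : z != x by rewrite eq_sym.
have nyx : lt rhd x y = false by exact: negbTE (lo_asym ryx).
have [[nuA0 nuA1] stA'] := stA.
have [[nuX0 nuX1] stX'] := stX.
have pAx : p x A = nuA ox.
  rewrite (pA x xA) (bigD1 ox) /=; last first.
    rewrite inE; apply/forallP => b; apply/implyP => _; apply/implyP => bx.
    by rewrite (crave_lt Hx) eqxx orTb andbT eq_sym.
  rewrite big1 ?addr0 // => o /andP[oN oox].
  case: (boolP [exists w, is_crave rhd w o]) => [/existsP [w hw]|nc]; last exact: st0 stA nc.
  exfalso; case: (eqVneq w x) => [E|wx].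
    by subst w; move: oox; rewrite (crave_uniq hw Hx) eqxx.
  move: oN; rewrite inE => /forallP /(_ y); rewrite !inE eqxx orbT /= yx /= (crave_lt hw) xy /=.
  by rewrite eq_sym (negbTE wx) nyx andbF.
have pXx : nuX ox <= p x setT.
  rewrite (pX x (in_setT x)) (bigD1 ox) /=; last first.
    rewrite inE; apply/forallP => b; apply/implyP => _; apply/implyP => bx.
    by rewrite (crave_lt Hx) eqxx orTb andbT eq_sym.
  by rewrite lerDl sumr_ge0.
have nuXx : nu ox <= nuX ox.
  have -> : nu ox = \sum_o nuX o * nu ox by rewrite -big_distrl /= nuX1 mul1r.
  rewrite [nuX ox]stX' ler_sum // => o _.
  case: (boolP [exists w, is_crave rhd w o]) => [/existsP [w hw]|nc]; last first.
    by rewrite (st0 _ _ _ stX nc) !mul0r.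
  rewrite /mchain (@Mel_eq _ _ _ w) ?inE //; last first.
    by move=> b _ bw; rewrite (crave_lt hw) eqxx eq_sym bw.
  by rewrite (tcrave w w o hw ox) (phiP w w).2.1 mul0r add0r subr0 mul1r.
have key : forall o, mchain t A o ox <= nu ox.
  move=> o; rewrite /mchain (Mel2 o xy).
  set M := if lt o x y then x else y.
  case: (boolP [exists w, is_crave rhd w o]) => [/existsP [w hw]|nc]; last first.
    by rewrite (tnon M o (nuzero _ nc)).
  rewrite (tcrave M w o hw ox).
  case: (eqVneq w x) => [E|wx].
    subst w; have E := crave_uniq hw Hx; subst o.
    rewrite /M (crave_lt Hx) xy eqxx /= (phiP x x).2.1 mul0r add0r subr0 mul1r //.
  rewrite (negbTE (crave_neq Hx hw _)) ?mulr0 ?add0r; last by rewrite eq_sym.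
  have [/andP [p0 p1] _] := phiP M w.
  have := nu0 ox; nra.
have mz : mchain t A oz ox = (1 - phi y z) * nu ox.
  rewrite /mchain (Mel2 oz xy) (crave_lt Hz) xy /= (negbTE xz) yz nyx /=.
  by rewrite (tcrave y z oz Hz ox) (negbTE (crave_neq Hx Hz xz)) mulr0 add0r.
have mpos : forall o, 0 < mchain t A o oz.
  move=> o; rewrite /mchain (Mel2 o xy).
  set M := if lt o x y then x else y.
  case: (boolP [exists w, is_crave rhd w o]) => [/existsP [w hw]|nc]; last first.
    by rewrite (tnon M o (nuzero _ nc)).
  rewrite (tcrave M w o hw oz).
  have [/andP [p0 p1] _] := phiP M w.
  have : (0 <= (oz == o)%:R :> R) by rewrite ler0n.
  nra.
have nuAz : 0 < nuA oz.
  have [o0 h0] : exists o0, 0 < nuA o0.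
    case: (pickP (fun o => 0 < nuA o)) => [o0 h|none]; first by exists o0.
    exfalso; move: nuA1; rewrite big1 => [/eqP|o _]; first by rewrite eq_sym oner_eq0.
    have := none o; have := nuA0 o; rewrite le_eqVlt => /orP[/eqP <- //|->//].
  rewrite stA' (bigD1 o0) //=.
  have h1 := mulr_gt0 h0 (mpos o0).
  have h2 : 0 <= \sum_(i | i != o0) nuA i * mchain t A i oz.
    by apply: sumr_ge0 => o _; apply: mulr_ge0 => //; apply: ltW.
  lra.
have nuAx : nuA ox < nu ox.
  suff : 0 < nu ox - nuA ox by rewrite subr_gt0.
  have -> : nu ox - nuA ox = \sum_o (nuA o * nu ox - nuA o * mchain t A o ox).
    by rewrite sumrB -big_distrl /= nuA1 mul1r -stA'.
  rewrite (bigD1 oz) //= mz.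
  have h1 : 0 < nuA oz * nu ox - nuA oz * ((1 - phi y z) * nu ox).
    have -> : nuA oz * nu ox - nuA oz * ((1 - phi y z) * nu ox) = nuA oz * phi y z * nu ox by ring.
    by rewrite !mulr_gt0 // (phiP y z).2.2.
  have h2 : 0 <= \sum_(i | i != oz) (nuA i * nu ox - nuA i * mchain t A i ox).
    by apply: sumr_ge0 => o _; rewrite subr_ge0 ler_wpM2l.
  lra.
rewrite pAx; lra.
Qed.
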